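(* Let $n\ge 3$ and let $L^B$ be a blow-up of the Boolean lattice $L\cong\mathbf{2}^n$. Then: (1) $L^B$ and its dual lattice $(L^B)^{\partial}$ are both pseudocomplemented; (2) $[L^B]\cong[(L^B)^{\partial}]\cong L\cong \mathbf{2}^n$; (3) for $a,b\in L^B$, $a^{\perp}=b^{\perp}$ if and only if $a^*=b^*$, where $a^*,b^*$ denote the pseudocomplements of $a,b$ in $L^B$.
   Context: Blow-up: Let $L\cong\mathbf{2}^n$ be a Boolean lattice with atoms $q_1,\dots,q_n$. A blow-up $L^B$ of $L$ is obtained by replacing each element $a\in L\setminus\{0,1\}$ by a finite chain $C_a$: $a=a^{1}\lessdot a^{2}\lessdot\cdots\lessdot a^{k_a}$ ($k_a\ge1$), keeping $0$ and $1$ as single elements; the order is: elements of the same chain $C_a$ are ordered along the chain, and for $u\in C_a$, $v\in C_b$ with $a\neq b$ (where $C_0=\{0\}$, $C_1=\{1\}$), $u\le v$ iff $a<b$ in $L$. In a poset $P$ with $0$, $a^{\perp}=\{b\in P:\{a,b\}^{\ell}=\{0\}\}$, where $\{a,b\}^\ell$ is the set of common lower bounds. The pseudocomplement $a^*$ of $a$ is the (unique if it exists) element with $\{a,a^*\}^{\ell}=\{0\}$ and such that $\{a,x\}^{\ell}=\{0\}$ implies $x\le a^*$; $P$ is pseudocomplemented if every element has one. For a lattice $M$ with $0$, $x\sim y$ iff $x^{\perp}=y^{\perp}$; $[x]$ is the class of $x$, and $[M]=\{[x]:x\in M\}$ is ordered by $[a]\le[b]$ iff $b^{\perp}\subseteq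 a^{\perp}$. *)

(* Defs.v *)
From mathcomp Require Import all_boot.
Set Implicit Arguments. Unset Strict Implicit. Unset Printing Implicit Defensive.

Definition perp (T : Type) (le : T -> T -> Prop) (z : T) (a : T) : T -> Prop :=
  fun b => forall c, le c a -> le c b -> c = z.

Definition is_pcompl (T : Type) (le : T -> T -> Prop) (z : T) (a p : T) : Prop :=
  perp le z a p /\ (forall x, perp le z a x -> le x p).

Definition pseudocomplemented (T : Type) (le : T -> T -> Prop) (z : T) : Prop :=
  forall a, exists p, is_pcompl le z a p.

(* [M] is order-isomorphic to the Boolean lattice 2^n = ({set 'I_n}, \subset):
   there is a surjection f : T -> {set 'I_n} with
   x ~ y (x^perp = y^perp) iff f x = f y, and [x] <= [y] (y^perp ⊆ x^perp)
   iff f x \subset f y.  This is exactly an order isomorphism [M] ≅ 2^n. *)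
Definition classes_iso_bool (T : Type) (le : T -> T -> Prop) (z : T) (n : nat) : Prop :=
  exists f : T -> {set 'I_n},
    (forall A : {set 'I_n}, exists x, f x = A) /\
    (forall x y, (forall w, perp le z x w <-> perp le z y w) <-> f x = f y) /\
    (forall x y, (forall w, perp le z y w -> perp le z x w) <-> f x \subset f y).

(* chain length of the element a; 0 and 1 are not blown up *)
Definition bkk (n : nat) (k : {set 'I_n} -> nat) (a : {set 'I_n}) : nat :=
  if (a == set0) || (a == setT) then 1 else k a.

(* element (a, i) is a^{i+1} in the chain C_a *)
Definition blowup (n : nat) (k : {set 'I_n} -> nat) : Type :=
  {p : {set 'I_n} * nat | p.2 < bkk k p.1}.

Definition bu_le (n : nat) (k : {set 'I_n} -> nat) (x y : blowup k) : Prop :=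
  let a := (val x).1 in let i := (val x).2 in
  let b := (val y).1 in let j := (val y).2 in
  ((a == b) && (i <= j)) || (a \proper b).

Definition bu_dual_le (n : nat) (k : {set 'I_n} -> nat) (x y : blowup k) : Prop :=
  bu_le y x.

Lemma bu_bot_proof (n : nat) (k : {set 'I_n} -> nat) : (set0 : {set 'I_n}, 0).2 < bkk k (set0 : {set 'I_n}, 0).1.
Proof. by rewrite /bkk eqxx. Qed.

Lemma bu_top_proof (n : nat) (k : {set 'I_n} -> nat) : (setT : {set 'I_n}, 0).2 < bkk k (setT : {set 'I_n}, 0).1.
Proof. by rewrite /bkk eqxx orbT. Qed.

Definition bu_bot (n : nat) (k : {set 'I_n} -> nat) : blowup k :=
  exist _ (set0 : {set 'I_n}, 0) (bu_bot_proof k).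

Definition bu_top (n : nat) (k : {set 'I_n} -> nat) : blowup k :=
  exist _ (setT : {set 'I_n}, 0) (bu_top_proof k).

(* Main.v *)
Require Import Defs.
From mathcomp Require Import all_boot.
Set Implicit Arguments. Unset Strict Implicit. Unset Printing Implicit Defensive.

Definition HK n (k : {set 'I_n} -> nat) :=
  forall a : {set 'I_n}, a != set0 -> a != setT -> 0 < k a.

Lemma bkk_gt0 n (k : {set 'I_n} -> nat) (hk : HK k) A : 0 < bkk k A.
Proof.
rewrite /bkk; have [//|h0] := eqVneq A set0; have [//|hT] := eqVneq A setT.
exact: hk.
Qed.

Lemma bkkT n (k : {set 'I_n} -> nat) : bkk k setT = 1.
Proof. by rewrite /bkk eqxx orbT. Qed.

Lemma bkk0 n (k : {set 'I_n} -> nat) : bkk k set0 = 1.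
Proof. by rewrite /bkk eqxx. Qed.

Definition mk0 n (k : {set 'I_n} -> nat) (hk : HK k) A : blowup k :=
  exist _ (A, 0) (bkk_gt0 hk A).

Lemma mkL_proof n (k : {set 'I_n} -> nat) (hk : HK k) A :
  (A, (bkk k A).-1).2 < bkk k (A, (bkk k A).-1).1.
Proof. by rewrite /= ltn_predL bkk_gt0. Qed.

Definition mkL n (k : {set 'I_n} -> nat) (hk : HK k) A : blowup k :=
  exist _ (A, (bkk k A).-1) (mkL_proof hk A).

Lemma le_sub n (k : {set 'I_n} -> nat) (x y : blowup k) :
  bu_le x y -> (val x).1 \subset (val y).1.
Proof.
by rewrite /bu_le /= => /orP [/andP [/eqP -> _] | /proper_sub].
Qed.

Lemma sub_le n (k : {set 'I_n} -> nat) (x y : blowup k) :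
  (val x).1 \subset (val y).1 ->
  ((val x).1 == (val y).1 -> (val x).2 <= (val y).2) -> bu_le x y.
Proof.
case: x => [[A i] hx]; case: y => [[B j] hy] /= hs hi; rewrite /bu_le /=.
apply/orP; case: (boolP (A == B)) => e.
  by left; rewrite /= (hi e).
right; have h : A \proper B by rewrite properEneq e hs.
exact h.
Qed.

Lemma le_last n (k : {set 'I_n} -> nat) (x : blowup k) :
  (val x).2 <= (bkk k (val x).1).-1.
Proof. case: x => [[A i] /= h]; move: h; by case: (bkk k A). Qed.

Lemma le_mkL n (k : {set 'I_n} -> nat) (hk : HK k) (x : blowup k) (A : {set 'I_n}) :
  (val x).1 \subset A -> bu_le x (mkL hk A).
Proof.
move=> hs; apply: sub_le => //= /eqP e; rewrite -e; exact: le_last.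
Qed.

Lemma le_mk0 n (k : {set 'I_n} -> nat) (hk : HK k) (x : blowup k) (A : {set 'I_n}) :
  A \subset (val x).1 -> bu_le (mk0 hk A) x.
Proof. by move=> hs; apply: sub_le. Qed.

Lemma perpE n (k : {set 'I_n} -> nat) (hk : HK k) (x y : blowup k) :
  perp (@bu_le n k) (bu_bot k) x y <-> (val x).1 :&: (val y).1 = set0.
Proof.
split.
- move=> h; apply/eqP.
  have [//|ne] := eqVneq ((val x).1 :&: (val y).1) set0.
  have e := h (mk0 hk ((val x).1 :&: (val y).1))
    (le_mk0 hk (subsetIl _ _)) (le_mk0 hk (subsetIr _ _)).
  have := congr1 (fun z : blowup k => (val z).1) e => /= E.
  by rewrite E eqxx in ne.
- move=> hI c hca hcb.
  have s : (val c).1 \subset set0 by rewrite -hI subsetI (le_sub hca) (le_sub hcb).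
  have c1 : (val c).1 = set0 by apply/eqP; rewrite -subset0.
  apply: val_inj; case: c {hca hcb} s c1 => [[A i] hi] /= _ eA.
  subst A; move: hi; rewrite bkk0 /=; by case: i.
Qed.

Lemma dperpE n (k : {set 'I_n} -> nat) (hk : HK k) (x y : blowup k) :
  perp (@bu_dual_le n k) (bu_top k) x y <-> (val x).1 :|: (val y).1 = setT.
Proof.
split.
- move=> h; apply/eqP.
  have [//|ne] := eqVneq ((val x).1 :|: (val y).1) setT.
  have e := h (mkL hk ((val x).1 :|: (val y).1))
    (le_mkL hk (subsetUl _ _)) (le_mkL hk (subsetUr _ _)).
  have := congr1 (fun z : blowup k => (val z).1) e => /= E.
  by rewrite E eqxx in ne.
- move=> hU c hca hcb.
  have s : setT \subset (val c).1 by rewrite -hU subUset (le_sub hca) (le_sub hcb).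
  have c1 : (val c).1 = setT by apply/eqP; rewrite eqEsubset s subsetT.
  apply: val_inj; case: c {hca hcb} s c1 => [[A i] hi] /= _ eA.
  subst A; move: hi; rewrite bkkT /=; by case: i.
Qed.

Lemma disjC n (A B : {set 'I_n}) : A :&: B = set0 -> B \subset ~: A.
Proof.
move=> h; rewrite subsets_disjoint setCK disjoint_sym -setI_eq0; exact/eqP.
Qed.

Lemma unionC n (A B : {set 'I_n}) : A :|: B = setT -> ~: A \subset B.
Proof.
move=> h; apply/subsetP => i; rewrite inE => hi.
have : i \in A :|: B by rewrite h inE.
by rewrite inE (negbTE hi).
Qed.

Lemma perp_sub n (k : {set 'I_n} -> nat) (hk : HK k) (x y : blowup k) :
  (forall w, perp (@bu_le n k) (bu_bot k) y w -> perp (@bu_le n k) (bu_bot k) x w)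
  <-> (val x).1 \subset (val y).1.
Proof.
split.
- move=> h.
  have := h (mk0 hk (~: (val y).1)) (proj2 (perpE hk y (mk0 hk (~: (val y).1))) (setICr (val y).1)).
  move/(perpE hk) => /= e.
  have := disjC e; by rewrite setCS.
- move=> hs w /(perpE hk) hy; apply/(perpE hk); apply/eqP.
  by rewrite -subset0 -hy setSI.
Qed.

Lemma dperp_sub n (k : {set 'I_n} -> nat) (hk : HK k) (x y : blowup k) :
  (forall w, perp (@bu_dual_le n k) (bu_top k) y w -> perp (@bu_dual_le n k) (bu_top k) x w)
  <-> (val y).1 \subset (val x).1.
Proof.
split.
- move=> h.
  have := h (mk0 hk (~: (val y).1)) (proj2 (dperpE hk y (mk0 hk (~: (val y).1))) (setUCr (val y).1)).
  move/(dperpE hk) => /= e.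
  have := unionC e; by rewrite setCS.
- move=> hs w /(dperpE hk) hy; apply/(dperpE hk); apply/eqP.
  rewrite eqEsubset subsetT /= -hy; exact: setSU.
Qed.

Lemma perp_eq n (k : {set 'I_n} -> nat) (hk : HK k) (x y : blowup k) :
  (forall w, perp (@bu_le n k) (bu_bot k) x w <-> perp (@bu_le n k) (bu_bot k) y w)
  <-> (val x).1 = (val y).1.
Proof.
split.
- move=> h; apply/eqP; rewrite eqEsubset.
  apply/andP; split; [apply/(perp_sub hk x y) | apply/(perp_sub hk y x)];
    by move=> w hw; case: (h w) => h1 h2; auto.
- move=> e w; split => hw.
  + by apply: (proj2 (perp_sub hk y x)) hw; rewrite e.
  + by apply: (proj2 (perp_sub hk x y)) hw; rewrite e.
Qed.

Lemma dperp_eq n (k : {set 'I_n} -> nat) (hk : HK k) (x y : blowup k) :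
  (forall w, perp (@bu_dual_le n k) (bu_top k) x w <-> perp (@bu_dual_le n k) (bu_top k) y w)
  <-> (val x).1 = (val y).1.
Proof.
split.
- move=> h; apply/eqP; rewrite eqEsubset.
  apply/andP; split; [apply/(dperp_sub hk y x) | apply/(dperp_sub hk x y)];
    by move=> w hw; case: (h w) => h1 h2; auto.
- move=> e w; split => hw.
  + by apply: (proj2 (dperp_sub hk y x)) hw; rewrite e.
  + by apply: (proj2 (dperp_sub hk x y)) hw; rewrite e.
Qed.

Lemma pcomplE n (k : {set 'I_n} -> nat) (hk : HK k) (a p : blowup k) :
  is_pcompl (@bu_le n k) (bu_bot k) a p -> p = mkL hk (~: (val a).1).
Proof.
move=> [hp hmax].
have h0 : bu_le (mkL hk (~: (val a).1)) p.
  apply: hmax; apply/(perpE hk) => /=; exact: setICr.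
have s1 : (val p).1 \subset ~: (val a).1 by apply: disjC; apply/(perpE hk).
have s2 := le_sub h0.
have e1 : (val p).1 = ~: (val a).1 by apply/eqP; rewrite eqEsubset s1.
have hl2 := le_last p.
move: h0 e1 hl2; case: p {hp hmax s1 s2} => [[A i] hi] /= h0 e1; subst A => hl2.
move: h0; rewrite /bu_le /= eqxx /= => /orP [hl|]; last by rewrite properE andbN.
by apply: val_inj => /=; congr pair; apply/eqP; rewrite eqn_leq hl hl2.
Qed.

Theorem mainTheorem3 (n : nat) (k : {set 'I_n} -> nat)
  (hn : 3 <= n)
  (hk : forall a : {set 'I_n}, a != set0 -> a != setT -> 0 < k a) :
  (* (1) L^B and its dual are pseudocomplemented *)
  (pseudocomplemented (@bu_le n k) (bu_bot k) /\
   pseudocomplemented (@bu_dual_le n k) (bu_top k)) /\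
  (* (2) [L^B] ≅ [(L^B)^dual] ≅ 2^n *)
  (classes_iso_bool (@bu_le n k) (bu_bot k) n /\
   classes_iso_bool (@bu_dual_le n k) (bu_top k) n) /\
  (* (3) a^perp = b^perp iff a^* = b^* (pseudocomplements in L^B) *)
  (forall a b pa pb : blowup k,
     is_pcompl (@bu_le n k) (bu_bot k) a pa ->
     is_pcompl (@bu_le n k) (bu_bot k) b pb ->
     ((forall w, perp (@bu_le n k) (bu_bot k) a w <-> perp (@bu_le n k) (bu_bot k) b w)
      <-> pa = pb)).
Proof.
have hk' : HK k := hk.
split; [split|split; [split|]].
- move=> a; exists (mkL hk' (~: (val a).1)); split.
  + apply/(perpE hk') => /=; exact: setICr.
  + move=> x /(perpE hk') h; apply: le_mkL; exact: disjC.
- move=> a; exists (mk0 hk' (~: (val a).1)); split.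
  + apply/(dperpE hk') => /=; exact: setUCr.
  + move=> x /(dperpE hk') h; rewrite /bu_dual_le; apply: le_mk0; exact: unionC.
- exists (fun x => (val x).1); split; [|split].
  + by move=> A; exists (mk0 hk' A).
  + move=> x y; exact: perp_eq.
  + move=> x y; exact: perp_sub.
- exists (fun x => ~: (val x).1); split; [|split].
  + by move=> A; exists (mk0 hk' (~: A)); rewrite /= setCK.
  + move=> x y; split => h; first by rewrite (proj1 (dperp_eq hk' x y) h).
    apply/(dperp_eq hk'); exact: setC_inj h.
  + move=> x y; rewrite setCS; exact: dperp_sub.
- move=> a b pa pb ha hb; rewrite (pcomplE hk' ha) (pcomplE hk' hb).
  split => h; first by rewrite (proj1 (perp_eq hk' a b) h).
  apply/(perp_eq hk'); move: h.
  by move/(congr1 (fun z : blowup k => (val z).1)) => /= /setC_inj.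
Qed.
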